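(* Assume the refinement setting of the context, and assume $F(u)=u$, $G(u)=u$, $p\cap\overline{q}\subseteq F(p\cup q)$, $p\cap\overline{q}\subseteq\mathrm{grd}(G)$ and $p\cap\overline{q}\subseteq G(q)$. Let $p'=r^{-1}[p]$ and $q'=r^{-1}[q]$. Then $p'\cup q'\subseteq{\cal L}(X'(q'))(q')$, where ${\cal L}(X'(q'))(s)$ denotes the greatest fixpoint of the monotone map $Y\mapsto q'\cup\big(G'(s)\cap F'(Y)\cap H(Y)\big)$ on $\mathbb{P}(v)$ (the liberal set transformer of the concrete fair iteration $X'(q')=\overline{q'}\Longrightarrow(((F'\sqcap H);X'(q'))\mathrel{\triangledown} G')$).
   Context: Refinement setting: $u$ (abstract states) and $v$ (concrete states) are sets; $F,G$ are conjunctive set transformers on $u$ and $F',G',H$ conjunctive set transformers on $v$ (conjunctive = preserves intersections of nonempty families of subsets, hence monotone). $\mathrm{grd}(E)=\overline{E(\varnothing)}$. $r\subseteq v\times u$ is a total relation (every $y\in v$ is related to some $x\in u$). For $a\subseteq v$, $r[a]=\{x\in u\mid\exists y\in a,(y,x)\in r\}$; for $b\subseteq u$, $r^{-1}[b]=\{y\in v\mid\exists x\in b,(y,x)\in r\}$. Complements $\overline{\cdot}$ are taken in $u$ for subsets of $u$ and in $v$ for subsets of $v$. The refinement conditions are: for all $s\subseteq v$, $F(\overline{r[\overline{s}]})\subseteq\overline{r[\overline{F'(s)}]}$, $G(\overline{r[\overline{s}]})\subseteq\overline{r[\overline{G'(s)}]}$, and $\overline{r[\overline{s}]}\subseteq\overline{r[\overline{H(s)}]}$.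 $p,q\subseteq u$. The choice $F'\sqcap H$ is $s\mapsto F'(s)\cap H(s)$. *)

(* Defs.v *)
From mathcomp Require Import all_boot.
From mathcomp Require Import boolp classical_sets.
Set Implicit Arguments. Unset Strict Implicit. Unset Printing Implicit Defensive.
Local Open Scope classical_set_scope.

Definition transformer (T : Type) := set T -> set T.

Definition conjunctive (T : Type) (E : transformer T) : Prop :=
  forall S : set (set T), S !=set0 ->
    E (\bigcap_(X in S) X) = \bigcap_(X in S) E X.

Definition grd (T : Type) (E : transformer T) : set T := ~` E set0.

Definition rimg (V U : Type) (r : V -> U -> Prop) (a : set V) : set U :=
  [set x | exists2 y, a y & r y x].
Definition rpre (V U : Type) (r : V -> U -> Prop) (b : set U) : set V :=
  [set y | exists2 x, b x & r y x].

Definition total_rel (V U : Type) (r : V -> U -> Prop) : Prop :=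
  forall y : V, exists x : U, r y x.

(* Greatest fixpoint of a (monotone) map on P(T): union of all post-fixpoints
   (Knaster–Tarski). *)
Definition gfp (T : Type) (f : set T -> set T) : set T :=
  \bigcup_(Y in [set Y | Y `<=` f Y]) Y.

(* Liberal set transformer L(X'(q'))(s) of the concrete fair iteration
   X'(q') = ~q' ==> (((F' ⊓ H); X'(q')) ▽ G'): greatest fixpoint of
   Y |-> q' ∪ (G'(s) ∩ F'(Y) ∩ H(Y)). *)
Definition Lfair (V : Type) (F' G' H : transformer V) (q' s : set V) : set V :=
  gfp (fun Y => q' `|` (G' s `&` F' Y `&` H Y)).

(* Main.v *)
Require Import Defs.
From mathcomp Require Import all_boot.
From mathcomp Require Import boolp classical_sets.
Local Open Scope classical_set_scope.

Lemma conj_mono (T : Type) (E : transformer T) (A B : set T) :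
  conjunctive E -> A `<=` B -> E A `<=` E B.
Proof.
move=> hE hAB.
have h := hE [set X | X = A \/ X = B].
have ne : [set X | X = A \/ X = B] !=set0 by exists A; left.
have eq : \bigcap_(X in [set X | X = A \/ X = B]) X = A.
  apply/seteqP; split => x.
  - by move=> hx; apply: hx; left.
  - by move=> ha X [->|->] //; apply: hAB.
move: (h ne); rewrite eq => ->.
by move=> x hx; apply: hx; right.
Qed.

Theorem lemma5 (u v : Type) (F G : transformer u) (F' G' H : transformer v)
  (r : v -> u -> Prop) (p q : set u) :
  conjunctive F -> conjunctive G ->
  conjunctive F' -> conjunctive G' -> conjunctive H ->
  total_rel r ->
  (forall s : set v, F (~` rimg r (~` s)) `<=` ~` rimg r (~` F' s)) ->
  (forall s : set v, G (~` rimg r (~` s)) `<=` ~` rimg r (~` G' s)) ->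
  (forall s : set v, ~` rimg r (~` s) `<=` ~` rimg r (~` H s)) ->
  F setT = setT -> G setT = setT ->
  p `&` ~` q `<=` F (p `|` q) ->
  p `&` ~` q `<=` grd G ->
  p `&` ~` q `<=` G q ->
  rpre r p `|` rpre r q `<=` Lfair F' G' H (rpre r q) (rpre r q).
Proof.
move=> cF cG cF' cG' cH _ hF hG hH _ _ hpF _ hpG.
set Y := rpre r p `|` rpre r q.
move=> y hy; exists Y => //.
move=> z hz.
case: (pselect (rpre r q z)) => hzq; [by left|right].
have [x px rzx] : rpre r p z.
  by case: hz => // hz'; exfalso.
have nqx : ~ q x by move=> qx; apply: hzq; exists x.
have pnq : (p `&` ~` q) x by split.
split; [split|].
- have h1 : q `<=` ~` rimg r (~` rpre r q).
    by move=> w qw [y' ny' ry']; apply: ny'; exists w.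
  have := hG _ _ (@conj_mono _ _ _ _ cG h1 _ (hpG _ pnq)).
  move=> hn; apply: contrapT => nz; apply: hn; by exists z.
- have h1 : p `|` q `<=` ~` rimg r (~` Y).
    move=> w [pw|qw] [y' ny' ry']; apply: ny'; [left|right]; by exists w.
  have := hF _ _ (@conj_mono _ _ _ _ cF h1 _ (hpF _ pnq)).
  move=> hn; apply: contrapT => nz; apply: hn; by exists z.
- have h1 : ~ rimg r (~` Y) x.
    move=> [y' ny' ry']; apply: ny'; left; by exists x.
  have := hH _ _ h1.
  move=> hn; apply: contrapT => nz; apply: hn; by exists z.
Qed.
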